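(* There exist $(P_3,l)$-jumbles for infinitely many positive integers $l$.
   Context: All graphs are finite and simple; $P_3$ is the path on $3$ vertices, and a graph is $P_3$-free if it has no induced subgraph isomorphic to $P_3$. For a positive integer $l$, a graph $H$ is a $(P_3,l)$-jumble if (S1) for every $0\le s\le l-1$, $V(H)$ can be partitioned into $s$ stable sets, $l-1-s$ cliques, and a set $Z$ such that $H[Z]$ is isomorphic to $P_3$; and (S2) for every partition $X_1,\dots,X_l$ of $V(H)$ there exists $i$ such that $H[X_i]$ is not $P_3$-free. *)

(* Defs.v *)
From mathcomp Require Import all_boot.
Set Implicit Arguments. Unset Strict Implicit. Unset Printing Implicit Defensive.

Definition simple_graph (V : finType) (e : rel V) : Prop :=
  symmetric e /\ irreflexive e.

Definition induces_P3 (V : finType) (e : rel V) (Z : {set V}) : Prop :=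
  exists a b c : V, [/\ a != b, b != c, a != c &
    [/\ Z = [set a; b; c], e a b, e b c & ~~ e a c]].

Definition P3_free_on (V : finType) (e : rel V) (X : {set V}) : Prop :=
  ~ exists Z : {set V}, Z \subset X /\ induces_P3 e Z.

Definition stable_set (V : finType) (e : rel V) (X : {set V}) : Prop :=
  forall x y, x \in X -> y \in X -> ~~ e x y.

Definition clique (V : finType) (e : rel V) (X : {set V}) : Prop :=
  forall x y, x \in X -> y \in X -> x != y -> e x y.

(* The partition is
   given by an assignment c : V -> option ('I_s + 'I_(l-1-s)),
   None meaning "in Z". *)
Definition S1_prop (V : finType) (e : rel V) (l : nat) : Prop :=
  forall s : nat, s <= l - 1 ->
    exists c : V -> option ('I_s + 'I_(l - 1 - s)),
      [/\ forall i : 'I_s, stable_set e [set x | c x == Some (inl i)],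
          forall j : 'I_(l - 1 - s), clique e [set x | c x == Some (inr j)]
        & induces_P3 e [set x | c x == None]].

Definition S2_prop (V : finType) (e : rel V) (l : nat) : Prop :=
  forall f : V -> 'I_l, exists i : 'I_l, ~ P3_free_on e [set x | f x == i].

Definition P3_jumble (V : finType) (e : rel V) (l : nat) : Prop :=
  S1_prop e l /\ S2_prop e l.

(* Main.v *)
Require Import Defs.
From mathcomp Require Import all_boot.
From mathcomp Require Import zify.
From Stdlib Require Import Classical.
Set Implicit Arguments. Unset Strict Implicit. Unset Printing Implicit Defensive.

Definition S2pos (V : finType) (e : rel V) (l : nat) : Prop :=
  forall f : V -> 'I_l, exists i a b c,
    [/\ a != b, b != c, a != c, [/\ e a b, e b c & ~~ e a c]
      & [/\ f a == i, f b == i & f c == i]].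

Lemma transfer (V : finType) (e : rel V) (l : nat) :
  simple_graph e -> S1_prop e l -> S2pos e l ->
  exists (n : nat) (e' : rel 'I_n), simple_graph e' /\ P3_jumble e' l.
Proof.
move=> [Hsym Hirr] H1 H2.
exists #|V|, (fun x y => e (enum_val x) (enum_val y)).
split; first by split; [move=> x y; apply: Hsym | move=> x; apply: Hirr].
split.
- move=> s Hs; have [c [Hst Hcl [a [b [cc [Hab Hbc Hac [HZ Heab Hebc Hnac]]]]]]] := H1 s Hs.
  exists (fun x => c (enum_val x)); split.
  + move=> i x y; rewrite !inE => Hx Hy; apply: (Hst i); by rewrite inE.
  + move=> j x y; rewrite !inE => Hx Hy Hxy; apply: (Hcl j); rewrite ?inE //.
    by apply: contra Hxy => /eqP /enum_val_inj ->.
  + exists (enum_rank a), (enum_rank b), (enum_rank cc).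
    rewrite !(inj_eq enum_rank_inj) !enum_rankK; split => //; split => //.
    apply/setP => x; rewrite !inE.
    have := congr1 (fun S : {set V} => enum_val x \in S) HZ; rewrite /= !inE => ->.
    have E : forall y, (enum_val x == y) = (x == enum_rank y).
      by move=> y; apply/eqP/eqP => [<-|->]; rewrite ?enum_valK ?enum_rankK.
    by rewrite !E.
- move=> f; have [i [a [b [cc [Hab Hbc Hac [Heab Hebc Hnac] [Ha Hb Hc]]]]]] :=
    H2 (fun v => f (enum_rank v)).
  exists i => Hfree; apply: Hfree.
  exists [set enum_rank a; enum_rank b; enum_rank cc]; split.
  + apply/subsetP => x; rewrite !inE => /orP [/orP [] | ] /eqP ->; by [].
  + exists (enum_rank a), (enum_rank b), (enum_rank cc).
    by rewrite !(inj_eq enum_rank_inj) !enum_rankK.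
Qed.

Section Constr.
Variable l : nat.

Definition TT := {p : 'I_l.+1 * 'I_l.+1 | p.2 <= p.1}.
Definition cls (x : TT) : 'I_l.+1 := (val x).1.
Definition kof (x : TT) : nat := (val x).1.
Definition jof (x : TT) : nat := (val x).2.
Definition ee : rel TT := fun x y => kof x != kof y.

Lemma eqTT x y : kof x = kof y -> jof x = jof y -> x = y.
Proof.
rewrite /kof /jof => Hk Hj; apply: val_inj.
case: (val x) Hk Hj => a b; case: (val y) => c d /= Hk Hj.
by rewrite (val_inj Hk) (val_inj Hj).
Qed.

Lemma jof_le x : jof x <= kof x. Proof. exact: (valP x). Qed.
Lemma kof_le x : kof x <= l. Proof. by rewrite /kof -ltnS ltn_ord. Qed.

Definition v0 : TT := exist _ (ord0, ord0) (leqnn 0).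
Definition mkv (k j : nat) : TT := insubd v0 (inord k, inord j).

Lemma mkvK k j : j <= k -> k <= l -> kof (mkv k j) = k /\ jof (mkv k j) = j.
Proof.
move=> Hjk Hkl; rewrite /kof /jof /mkv insubdK /=.
  by rewrite !inordK //; lia.
by rewrite unfold_in /= !inordK //; lia.
Qed.

Lemma ee_simple : simple_graph ee.
Proof. by split; [move=> x y; rewrite /ee eq_sym | move=> x; rewrite /ee eqxx]. Qed.


Definition col (s : nat) (x : TT) : option ('I_s + 'I_(l - 1 - s)) :=
  let k := kof x in let j := jof x in
  if l - s < k then omap inl (insub (l - k))
  else if k == l - s then (if j < 2 then None else omap inr (insub (j - 2)))
  else if k == l - s - 1 then (if j < 1 then None else omap inr (insub (j - 1)))
  else omap inr (insub j).

Lemma col_spec s x : s <= l - 1 ->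
  match col s x with
  | None => (kof x = l - s /\ jof x < 2) \/ (kof x = l - s - 1 /\ jof x < 1)
  | Some (inl i) => kof x = l - i
  | Some (inr m) => [\/ kof x = l - s /\ jof x = m + 2,
                        kof x = l - s - 1 /\ jof x = m + 1 |
                        kof x < l - s - 1 /\ jof x = m]
  end.
Proof.
move=> Hs; have Hj := jof_le x; have Hk := kof_le x.
rewrite /col.
case: ifP => H1.
  case: insubP => [i Hi Hv | Hn] /=; first by move: Hv; rewrite /=; lia.
  by move: Hn; rewrite /=; lia.
case: ifP => /eqP H2.
  case: ifP => H3; first by left; split.
  case: insubP => [i Hi Hv | Hn] /=; first by move: Hv; rewrite /= => Hv; apply: Or31; lia.
  by move: Hn; rewrite /=; lia.
case: ifP => /eqP H4.
  case: ifP => H3; first by right; split; lia.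
  case: insubP => [i Hi Hv | Hn] /=; first by move: Hv; rewrite /= => Hv; apply: Or32; lia.
  by move: Hn; rewrite /=; lia.
case: insubP => [i Hi Hv | Hn] /=; first by move: Hv; rewrite /= => Hv; apply: Or33; lia.
by move: Hn; rewrite /=; lia.
Qed.

Lemma ee_S1 : 0 < l -> S1_prop ee l.
Proof.
move=> Hl s Hs; exists (col s); split.
- move=> i x y; rewrite !inE => /eqP Hx /eqP Hy.
  have := col_spec x Hs; have := col_spec y Hs; rewrite Hx Hy => Ey Ex.
  by rewrite /ee Ex Ey eqxx.
- move=> m x y; rewrite !inE => /eqP Hx /eqP Hy Hxy.
  have := col_spec x Hs; have := col_spec y Hs; rewrite Hx Hy => Ey Ex.
  apply/negP => /eqP Hk; move/eqP: Hxy; apply; apply: eqTT => //.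
  case: Ex => [[] ? ?|[] ? ?|[] ? ?]; case: Ey => [[] ? ?|[] ? ?|[] ? ?]; lia.
- have [a1 a2] := mkvK (j:=0) (k:=l-s) (leq0n _) (leq_subr _ _).
  have [b1 b2] := mkvK (j:=0) (k:=l-s-1) (leq0n _) (leq_trans (leq_subr _ _) (leq_subr _ _)).
  have [c1 c2] : kof (mkv (l-s) 1) = l - s /\ jof (mkv (l-s) 1) = 1.
    by apply: mkvK; lia.
  exists (mkv (l-s) 0), (mkv (l-s-1) 0), (mkv (l-s) 1).
  split.
  + by apply/negP => /eqP E; move: (congr1 kof E); rewrite a1 b1; lia.
  + by apply/negP => /eqP E; move: (congr1 kof E); rewrite c1 b1; lia.
  + by apply/negP => /eqP E; move: (congr1 jof E); rewrite a2 c2.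
  split.
  + apply/setP => x; rewrite !inE.
    have := col_spec x Hs; case: (col s x) => [[i|m]|] H.
    * apply/esym/negbTE; apply/negP => /orP [/orP [] |] /eqP E; rewrite E ?a1 ?b1 ?c1 in H; have := ltn_ord i; lia.
    * apply/esym/negbTE; apply/negP => /orP [/orP [] |] /eqP E; rewrite E ?a1 ?a2 ?b1 ?b2 ?c1 ?c2 in H;
      case: H => [[] ? ?|[] ? ?|[] ? ?]; lia.
    * rewrite eqxx; apply/esym.
      case: H => [[] H1 H2|[] H1 H2].
      - have [J|J] : jof x = 0 \/ jof x = 1 by lia.
          by rewrite (@eqTT x (mkv (l-s) 0)) ?eqxx //; lia.
        by rewrite (@eqTT x (mkv (l-s) 1)) ?eqxx ?orbT //; lia.
      - by rewrite (@eqTT x (mkv (l-s-1) 0)) ?eqxx ?orbT //; lia.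
  + by rewrite /ee a1 b1; lia.
  + by rewrite /ee c1 b1; lia.
  + by rewrite /ee a1 c1 eqxx.
Qed.

End Constr.

Lemma card_lt_ord n m : m <= n -> #|[set K : 'I_n | K < m]| = m.
Proof.
move=> Hmn.
have winj : injective (@widen_ord m n Hmn) by move=> a b E; apply: val_inj; exact: (congr1 val E).
have -> : [set K : 'I_n | K < m] = widen_ord Hmn @: setT.
  apply/setP => K; rewrite inE; apply/idP/imsetP => [HK|[j _ ->]] /=.
    by exists (Ordinal HK) => //; apply: val_inj.
  exact: ltn_ord.
by rewrite card_imset // cardsT card_ord.
Qed.

Lemma ee_S2 l : S2pos (ee (l:=l)) l.
Proof.
move=> f; apply: NNPP => Hno.
have mono : forall x y z, f x = f y -> f y = f z -> x != y -> kof x = kof y ->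
    kof z = kof x.
  move=> x y z Hxy Hyz Hneq Hk; apply: NNPP => Hz; apply: Hno.
  exists (f x), x, z, y; split.
  - by apply/negP => /eqP E; apply: Hz; rewrite E.
  - by apply/negP => /eqP E; apply: Hz; rewrite E Hk.
  - by [].
  - by split; rewrite /ee; [apply/eqP => E; apply: Hz | apply/eqP => E; apply: Hz; rewrite E Hk| rewrite Hk eqxx].
  - by rewrite Hxy Hyz eqxx.
pose D := [set i | [exists x, exists y, [&& x != y, kof x == kof y, f x == i & f y == i]]].
pose h i := if [pick x | f x == i] is Some x then cls x else ord0.
have Hh : forall x, f x \in D -> h (f x) = cls x.
  move=> x; rewrite inE => /existsP [u /existsP [v /and4P [Huv /eqP Hk /eqP Hu /eqP Hv]]].
  rewrite /h; case: pickP => [w /eqP Hw|]; last by move/(_ x); rewrite eqxx.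
  apply: val_inj; rewrite /=.
  have E1 : kof x = kof u by apply: (mono u v x); rewrite ?Hu ?Hv ?Hk.
  have E2 : kof w = kof u by apply: (mono u v w); rewrite ?Hu ?Hv ?Hw ?Hk.
  by move: E1 E2; rewrite /kof /cls => -> ->.
pose CD := [set cls x | x in [set x | f x \in D]].
have HCD : #|CD| <= #|D|.
  apply: leq_trans (leq_imset_card h D); apply: subset_leq_card.
  apply/subsetP => K /imsetP [x]; rewrite inE => Hx ->.
  by apply/imsetP; exists (f x) => //; rewrite Hh.
have HDl : #|D| <= l by have := max_card (mem D); rewrite card_ord.
pose Top := [set K : 'I_l.+1 | l - #|D| <= K].
have HTop : #|Top| = #|D|.+1.
  have := cardsC [set K : 'I_l.+1 | K < l - #|D|].
  rewrite card_lt_ord ?card_ord; last by lia.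
  have -> : ~: [set K : 'I_l.+1 | K < l - #|D|] = Top.
    by apply/setP => K; rewrite !inE -leqNgt.
  lia.
have : ~~ (Top \subset CD).
  by apply/negP => /subset_leq_card; rewrite HTop; lia.
case/subsetPn => K; rewrite inE => HK HKCD.
pose VK := [set x | cls x == K].
have HVK : K.+1 <= #|VK|.
  pose g (j : 'I_K.+1) := mkv l K j.
  have Hg : forall j : 'I_K.+1, kof (g j) = K /\ jof (g j) = j.
    move=> j; apply: mkvK; [by rewrite -ltnS ltn_ord | by rewrite -ltnS ltn_ord].
  have ginj : injective g.
    move=> j1 j2 E; apply: val_inj; have [_ E1] := Hg j1; have [_ E2] := Hg j2.
    by rewrite /= -E1 -E2 E.
  rewrite -[K.+1]card_ord -(card_imset _ ginj); apply: subset_leq_card.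
  apply/subsetP => x /imsetP [j _ ->]; rewrite inE; apply/eqP/val_inj.
  by have [E _] := Hg j; exact: E.
have HfD : forall x, x \in VK -> f x \notin D.
  move=> x; rewrite inE => Hx; apply/negP => HD; apply/negP: HKCD.
  rewrite ?negbK; apply/imsetP; exists x; [by rewrite inE | by rewrite (eqP Hx)].
have : #|f @: VK| <= #|~: D|.
  by apply: subset_leq_card; apply/subsetP => i /imsetP [x Hx ->]; rewrite inE HfD.
rewrite card_in_imset.
  have := cardsC D; rewrite card_ord; lia.
move=> x y Hx Hy Exy; apply: NNPP => Hne; move: (HfD x Hx); rewrite inE.
apply/negP; rewrite negbK; apply/existsP; exists x; apply/existsP; exists y.
rewrite -Exy !eqxx !andbT; apply/andP; split; first by apply/eqP.
by move: Hx Hy; rewrite !inE /kof /cls => /eqP -> /eqP ->.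
Qed.

Theorem theorem3p5 :
  forall N : nat, exists l : nat, N <= l /\ 0 < l /\
    exists (n : nat) (e : rel 'I_n), simple_graph e /\ P3_jumble e l.
Proof.
move=> N; exists N.+1; split; first exact: leqnSn.
split; first by [].
apply: (@transfer _ (ee (l:=N.+1))).
- exact: ee_simple.
- exact: ee_S1.
- exact: ee_S2.
Qed.
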